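(* Let $(X,b,m)$ be a connected weighted graph satisfying conditions (B) and (M), let $D\subset X$ and $\Omega:=X\setminus D$. Then $\mathrm{Covr}(D)=\mathrm{Inr}(\Omega)$.
   Context: A weighted graph $(X,b,m)$: $X$ countable, $b:X\times X\to[0,\infty)$ symmetric with $b(x,x)=0$ and $\sum_y b(x,y)<\infty$, $m:X\to(0,\infty)$. Condition (B): $\sup_x\frac{1}{m(x)}\sum_y b(x,y)<\infty$. Condition (M): $\sup_x m(x)<\infty$. A path is $\gamma=(x_0,\dots,x_k)$ with $b(x_j,x_{j+1})>0$, of length $L(\gamma)=\sum_{j=0}^{k-1}1/b(x_j,x_{j+1})$ (trivial paths have length $0$); connected means any two points are joined by a path; $d(x,y)$ is the infimum of lengths of paths from $x$ to $y$. $U_r(x):=\{y:d(x,y)<r\}$, $B_r(x):=\{y:d(x,y)\le r\}$. The inradius is $\mathrm{Inr}(\Omega):=\sup\{r>0:\exists x\in\Omega \text{ with } U_r(x)\subset\Omega\}$ and the covering radius is $\mathrm{Covr}(D):=\inf\{R>0: \bigcup_{p\in D}B_R(p)=X\}\in[0,\infty]$ with $\inf\emptyset=\infty$. *)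

(* Defs.v *)
From HB Require Import structures.
From mathcomp Require Import all_boot all_order all_algebra.
From mathcomp Require Import classical_sets boolp reals constructive_ereal ereal esum.

Set Implicit Arguments.
Unset Strict Implicit.
Unset Printing Implicit Defensive.

Import Order.TTheory GRing.Theory Num.Theory.
Local Open Scope classical_set_scope.
Local Open Scope ring_scope.

Section WeightedGraph.
Context {R : realType} {X : countType}.

Definition weighted_graph (b : X -> X -> R) (m : X -> R) : Prop :=
  (forall x y, 0 <= b x y) /\
  (forall x y, b x y = b y x) /\
  (forall x, b x x = 0) /\
  (forall x, (\esum_(y in [set: X]) (b x y)%:E < +oo)%E) /\
  (forall x, 0 < m x).

Definition condB (b : X -> X -> R) (m : X -> R) : Prop :=
  exists C : R, forall x,
    ((m x)^-1%:E * (\esum_(y in [set: X]) (b x y)%:E) <= C%:E)%E.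

Definition condM (m : X -> R) : Prop :=
  exists C : R, forall x, m x <= C.

(** A path (x_0,...,x_k) is encoded as x_0 :: s; consecutive points have b > 0. *)
Definition is_path (b : X -> X -> R) (x : X) (s : seq X) : bool :=
  path (fun u v => 0 < b u v) x s.

Definition path_length (b : X -> X -> R) (x : X) (s : seq X) : R :=
  \sum_(e <- zip (x :: s) s) (b e.1 e.2)^-1.

Definition connected_graph (b : X -> X -> R) : Prop :=
  forall x y, exists s, is_path b x s /\ last x s = y.

Definition gdist (b : X -> X -> R) (x y : X) : \bar R :=
  ereal_inf [set (path_length b x s)%:E | s in
               [set s | is_path b x s /\ last x s = y]].

Definition open_ball (b : X -> X -> R) (x : X) (r : R) : set X :=
  [set y | (gdist b x y < r%:E)%E].

Definition closed_ball (b : X -> X -> R) (x : X) (r : R) : set X :=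
  [set y | (gdist b x y <= r%:E)%E].

(** Inradius: sup{ r > 0 : exists x in Omega, U_r(x) ⊆ Omega }, with sup ∅ := 0. *)
Definition inradius (b : X -> X -> R) (Omega : set X) : \bar R :=
  ereal_sup ([set 0%E] `|` [set r%:E | r in
     [set r : R | 0 < r /\ exists2 x, Omega x & open_ball b x r `<=` Omega]]).

(** Covering radius: inf{ R > 0 : union_{p in D} B_R(p) = X }, with inf ∅ = +oo. *)
Definition covradius (b : X -> X -> R) (D : set X) : \bar R :=
  ereal_inf [set r%:E | r in
     [set r : R | 0 < r /\ \bigcup_(p in D) closed_ball b p r = [set: X]]].

End WeightedGraph.

(* Main.v *)
Require Import Defs.
From HB Require Import structures.
From mathcomp Require Import all_boot all_order all_algebra.
From mathcomp Require Import classical_sets boolp reals constructive_ereal ereal esum.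
From mathcomp Require Import lra.
Import Order.TTheory GRing.Theory Num.Theory.
Local Open Scope classical_set_scope.
Local Open Scope ring_scope.

Section S.
Variables (R : realType) (X : countType) (b : X -> X -> R).
Hypothesis bsym : forall x y, b x y = b y x.

Lemma pl_cons x y s : path_length b x (y :: s) = (b x y)^-1 + path_length b y s.
Proof. by rewrite /path_length /= big_cons. Qed.

Lemma pl_rcons z t x : path_length b z (rcons t x) = path_length b z t + (b (last z t) x)^-1.
Proof.
elim: t z => [|y t IH] z /=.
  by rewrite /path_length /= big_seq1 big_nil add0r.
by rewrite pl_cons IH pl_cons addrA.
Qed.

Lemma last_rev_belast (x : X) (s : seq X) : last (last x s) (rev (belast x s)) = x.
Proof. by case: s => [|y s] //=; rewrite rev_cons last_rcons. Qed.

Lemma pl_rev x s : path_length b x s = path_length b (last x s) (rev (belast x s)).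
Proof.
elim: s x => [|y s IH] x //=.
rewrite rev_cons pl_rcons pl_cons IH last_rev_belast bsym addrC //.
Qed.

Lemma ip_rev x s : is_path b x s -> is_path b (last x s) (rev (belast x s)).
Proof.
rewrite /is_path rev_path; apply: sub_path => u v /=; by rewrite bsym.
Qed.

Lemma gdist_sub x y :
  [set (path_length b x s)%:E | s in [set s | is_path b x s /\ last x s = y]] `<=`
  [set (path_length b y s)%:E | s in [set s | is_path b y s /\ last y s = x]].
Proof.
move=> _ [s [ps <-] <-]; exists (rev (belast x s)).
  by split; [apply: ip_rev | rewrite last_rev_belast].
by rewrite -pl_rev.
Qed.

Lemma gdist_sym x y : gdist b x y = gdist b y x.
Proof. by rewrite /gdist; congr ereal_inf; apply/seteqP; split; apply: gdist_sub. Qed.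

Lemma gdist_refl x : (gdist b x x <= 0)%E.
Proof.
apply: ereal_inf_lbound; exists [::] => //.
by rewrite /path_length /= big_nil.
Qed.
End S.

Theorem lemma3p6 (R : realType) (X : countType) (b : X -> X -> R) (m : X -> R)
  (D : classical_sets.set X) :
  weighted_graph b m -> connected_graph b -> condB b m -> condM m ->
  covradius b D = inradius b (classical_sets.setC D).
Proof.
move=> [b0 [bsym _]] _ _ _.
set Om := ~` D.
have key : forall r : R, 0 < r -> ~ (\bigcup_(p in D) closed_ball b p r = [set: X]) ->
    (r%:E <= inradius b Om)%E.
  move=> r r0 ncov.
  have [x nx] : exists x, ~ (\bigcup_(p in D) closed_ball b p r) x.
    apply: contrapT => H; apply: ncov; apply/seteqP; split => // x _.
    by apply: contrapT => nx; apply: H; exists x.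
  apply: ereal_sup_ubound; right; exists r => //; split => //; exists x.
  - move=> Dx; apply: nx; exists x => //; rewrite /closed_ball /=.
    by apply: le_trans (@gdist_refl _ _ b x) _; rewrite lee_fin ltW.
  - move=> y /= dxy Dy; apply: nx; exists y => //; rewrite /closed_ball /=.
    by rewrite (@gdist_sym _ _ b bsym) ltW.
apply/eqP; rewrite eq_le; apply/andP; split.
- apply/lee_addgt0Pr => e e0.
  have I0 : (0 <= inradius b Om)%E by apply: ereal_sup_ubound; left.
  case EI: (inradius b Om) I0 => [i| |] I0 //; last by rewrite /= leey.
  apply: ereal_inf_lbound; exists (i+e) => //.
  move: I0; rewrite lee_fin => i0.
  split; first by lra.
  apply: contrapT => nc; have := key _ _ nc; rewrite EI lee_fin; lra.
- apply: ge_ereal_sup => _ [-> | [r [r0 [x Omx sub]] <-]].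
  + by apply: le_ereal_inf_tmp => _ [r' [r'0 _] <-]; rewrite lee_fin ltW.
  + apply: le_ereal_inf_tmp => _ [r' [r'0 cov] <-]; rewrite lee_fin.
    apply: contrapT; move/negP; rewrite -ltNge => r'r.
    have : (\bigcup_(p in D) closed_ball b p r') x by rewrite cov.
    case=> p Dp /= hp; apply: (sub p) => //.
    rewrite /open_ball /= (@gdist_sym _ _ b bsym); apply: le_lt_trans hp _.
    by rewrite lte_fin.
Qed.
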